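(* Let $r\ge 1$ be an integer. The order of a $[1,r;4]$-mixed cage is $2(r+2)$. Moreover, a mixed graph $H$ is a $[1,r;4]$-mixed cage if and only if it is obtained from the complete bipartite graph $K_{r+2,r+2}$ by choosing a $2$-factor $F$ of $K_{r+2,r+2}$, orienting every cycle of $F$ as a directed cycle (these become the arcs of $H$), and keeping all remaining edges of $K_{r+2,r+2}$ as undirected edges.
   Context: A mixed graph is a finite simple graph that may contain both edges and arcs. A $[z,r;g]$-mixed graph is a mixed graph in which every vertex is the tail of exactly $z$ arcs, the head of exactly $z$ arcs, and is incident with exactly $r$ edges, and whose girth is $g$. Walks traverse edges in either direction and arcs only in their direction; a cycle is a closed walk with no repeated vertices (other than start = end) and no repeated edge or arc; the girth is the length of a shortest cycle. A $[z,r;g]$-mixed cage is a $[z,r;g]$-mixed graph of minimum order. *)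

(* Defs.v *)
From mathcomp Require Import all_boot.
Set Implicit Arguments. Unset Strict Implicit. Unset Printing Implicit Defensive.

(* A (finite, simple) mixed graph on vertex type V:
   e x y  : there is an (undirected) edge between x and y,
   a x y  : there is an arc with tail x and head y. *)
Definition mixed_graph (V : finType) (e a : rel V) : Prop :=
  symmetric e /\ irreflexive e /\ irreflexive a /\
  (forall x y, a x y -> ~~ a y x /\ ~~ e x y).

Definition mstep (V : finType) (e a : rel V) : rel V :=
  fun x y => e x y || a x y.

(* In a simple mixed graph
   every cycle has length >= 3 (length 1 = loop, length 2 would need two
   distinct elements joining the same pair). *)
Definition mcycle (V : finType) (e a : rel V) (s : seq V) : bool :=
  [&& 2 < size s, uniq s & cycle (mstep e a) s].

Definition has_girth (V : finType) (e a : rel V) (g : nat) : Prop :=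
  (exists s, mcycle e a s /\ size s = g) /\
  (forall s, mcycle e a s -> g <= size s).

Definition zrg_mixed_graph (z r g : nat) (V : finType) (e a : rel V) : Prop :=
  mixed_graph e a /\
  (forall x : V, #|[set y | a x y]| = z /\ #|[set y | a y x]| = z /\
                 #|[set y | e x y]| = r) /\
  has_girth e a g.

Definition mixed_cage (z r g : nat) (V : finType) (e a : rel V) : Prop :=
  zrg_mixed_graph z r g e a /\
  (forall (W : finType) (e' a' : rel W), zrg_mixed_graph z r g e' a' ->
     #|V| <= #|W|).

Definition Kvert (n : nat) : finType := (bool * 'I_n)%type.
Definition Kedge (n : nat) : rel (Kvert n) := fun x y => x.1 != y.1.

Definition two_factor (n : nat) (F : rel (Kvert n)) : Prop :=
  symmetric F /\ (forall x y, F x y -> Kedge x y) /\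
  (forall x, #|[set y | F x y]| = 2).

Definition directed_cycle_orientation (n : nat) (F A : rel (Kvert n)) : Prop :=
  (forall x y, F x y = A x y || A y x) /\
  (forall x y, ~~ (A x y && A y x)) /\
  (forall x, #|[set y | A x y]| = 1 /\ #|[set y | A y x]| = 1).

Definition from_K_edges (n : nat) (F : rel (Kvert n)) : rel (Kvert n) :=
  fun x y => Kedge x y && ~~ F x y.

Definition mixed_iso (V W : finType) (e a : rel V) (e' a' : rel W) : Prop :=
  exists f : V -> W, bijective f /\
    (forall x y, e' (f x) (f y) = e x y) /\
    (forall x y, a' (f x) (f y) = a x y).

(* Main.v *)
Require Import Defs.
From mathcomp Require Import all_boot.
Set Implicit Arguments. Unset Strict Implicit. Unset Printing Implicit Defensive.

Lemma card1_uniq (T : finType) (P : pred T) u v :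
  #|[set y | P y]| = 1 -> P u -> P v -> u = v.
Proof.
move/eqP/cards1P => [w hw] pu pv.
have : u \in [set y | P y] by rewrite inE.
have : v \in [set y | P y] by rewrite inE.
by rewrite hw !inE => /eqP -> /eqP ->.
Qed.

Lemma card1_ex (T : finType) (P : pred T) :
  #|[set y | P y]| = 1 -> exists u, P u.
Proof.
move/eqP/cards1P => [w hw]; exists w.
have : w \in [set y | P y] by rewrite hw inE.
by rewrite inE.
Qed.

Lemma card_disjU (T : finType) (A B : {set T}) :
  (forall y, y \in A -> y \in B -> False) -> #|A :|: B| = #|A| + #|B|.
Proof.
move=> h; rewrite cardsU.
have -> : A :&: B = set0.
  by apply/setP => y; rewrite !inE; apply/negbTE/negP => /andP [h1 h2]; exact: h h1 h2.
by rewrite cards0 subn0.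
Qed.

Lemma deg2 (T : finType) (A : rel T) x : (forall y, ~~ (A x y && A y x)) ->
  #|[set y | A x y]| = 1 -> #|[set y | A y x]| = 1 ->
  #|[set y | A x y || A y x]| = 2.
Proof.
move=> ha h1 h2.
have -> : [set y | A x y || A y x] = [set y | A x y] :|: [set y | A y x].
  by apply/setP => y; rewrite !inE.
rewrite card_disjU ?h1 ?h2 // => y; rewrite !inE => p q.
by have := ha y; rewrite p q.
Qed.

Lemma card_bij_pre (T T' : finType) (f : T -> T') (P : pred T') :
  bijective f -> #|[set x | P (f x)]| = #|[set y | P y]|.
Proof.
case=> g fg gf.
have E : f @: [set x | P (f x)] = [set y | P y].
  apply/setP => y; rewrite inE; apply/imsetP/idP => [[x]|Py].
    by rewrite inE => Px ->.
  by exists (g y); rewrite ?inE gf.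
by rewrite -E card_imset //; exact: can_inj fg.
Qed.

Lemma mcycle_map (V W : finType) (e a : rel V) (e' a' : rel W) (f : V -> W) :
  injective f -> (forall x y, e' (f x) (f y) = e x y) ->
  (forall x y, a' (f x) (f y) = a x y) ->
  forall s, mcycle e' a' (map f s) = mcycle e a s.
Proof.
move=> fi he ha s; rewrite /mcycle size_map map_inj_uniq //.
rewrite (@mono_cycle _ _ f (mstep e a) (mstep e' a')) //.
by move=> x y; rewrite /mstep he ha.
Qed.

Lemma iso_zrg (V W : finType) (e a : rel V) (e' a' : rel W) z r g :
  mixed_iso e a e' a' -> zrg_mixed_graph z r g e' a' ->
  zrg_mixed_graph z r g e a /\ #|V| = #|W|.
Proof.
case=> f [fb [he ha]] [[es [ei [ai asm]]] [deg [[s [cs ss]] gs]]].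
split; last exact: bij_eq_card fb.
have fi := bij_inj fb.
case: (fb) => f' ff' f'f.
split; [|split].
- split; first by move=> x y; rewrite -!he es.
  split; first by move=> x; rewrite -he ei.
  split; first by move=> x; rewrite -ha ai.
  by move=> x y; rewrite -!ha -he; apply: asm.
- move=> x; have [d1 [d2 d3]] := deg (f x).
  split; [|split].
  + rewrite -d1 -(card_bij_pre (a' (f x)) fb); apply: eq_card => y.
    by rewrite !inE ha.
  + rewrite -d2 -(card_bij_pre (a'^~ (f x)) fb); apply: eq_card => y.
    by rewrite !inE ha.
  + rewrite -d3 -(card_bij_pre (e' (f x)) fb); apply: eq_card => y.
    by rewrite !inE he.
- split.
    exists (map f' s); rewrite size_map; split => //.
    rewrite -(mcycle_map fi he ha) -map_comp.
    by rewrite (eq_map (g := id)) ?map_id // => y /=; rewrite f'f.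
  move=> t ct; rewrite -(size_map f); apply: gs.
  by rewrite (mcycle_map fi he ha).
Qed.

Section Gen2.
Variables (V : finType) (e a : rel V) (r : nat).
Hypothesis H : zrg_mixed_graph 1 r 4 e a.

Definition U x y := [|| e x y, a x y | a y x].

Lemma esym : symmetric e. Proof. by case: H => [[h _] _]. Qed.
Lemma eirr : irreflexive e. Proof. by case: H => [[_ [h _]] _]. Qed.
Lemma airr : irreflexive a. Proof. by case: H => [[_ [_ [h _]]] _]. Qed.
Lemma asimp x y : a x y -> ~~ a y x /\ ~~ e x y.
Proof. by case: H => [[_ [_ [_ h]]] _]; apply: h. Qed.
Lemma outdeg x : #|[set y | a x y]| = 1. Proof. by case: H => _ [h _]; case: (h x). Qed.
Lemma indeg x : #|[set y | a y x]| = 1. Proof. by case: H => _ [h _]; case: (h x) => _ []. Qed.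
Lemma edeg x : #|[set y | e x y]| = r. Proof. by case: H => _ [h _]; case: (h x) => _ []. Qed.
Lemma nocyc s : mcycle e a s -> 4 <= size s. Proof. by case: H => _ [_ [_ h]]; apply: h. Qed.

Lemma out_uniq x y z : a x y -> a x z -> y = z.
Proof. exact: card1_uniq (outdeg x). Qed.
Lemma in_uniq x y z : a y x -> a z x -> y = z.
Proof. exact: card1_uniq (indeg x). Qed.

Lemma Uirr x : U x x = false.
Proof. by rewrite /U eirr airr. Qed.
Lemma Usym x y : U x y = U y x.
Proof. by rewrite /U esym (orbC (a x y)). Qed.

Ltac ms := rewrite /mstep; apply/orP;
  first [left; assumption | right; assumption | left; rewrite esym; assumption].

Lemma notri x y z : U x y -> U y z -> U z x -> False.
Proof.
move=> hxy hyz hzx.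
have nxy : x != y by apply/eqP => E; rewrite E Uirr in hxy.
have nyz : y != z by apply/eqP => E; rewrite E Uirr in hyz.
have nzx : z != x by apply/eqP => E; rewrite E Uirr in hzx.
have nyx : y != x by rewrite eq_sym.
have nzy : z != y by rewrite eq_sym.
have nxz : x != z by rewrite eq_sym.
have cyc1 : mstep e a x y -> mstep e a y z -> mstep e a z x -> False.
  move=> h1 h2 h3; have := nocyc (s := [:: x; y; z]).
  by rewrite /mcycle /= h1 h2 h3 !inE negb_or nxy nxz nyz => /(_ isT).
have cyc2 : mstep e a x z -> mstep e a z y -> mstep e a y x -> False.
  move=> h1 h2 h3; have := nocyc (s := [:: x; z; y]).
  by rewrite /mcycle /= h1 h2 h3 !inE negb_or nxz nxy nzy => /(_ isT).
move: hxy hyz hzx; rewrite /U => /or3P [h1|h1|h1] /or3P [h2|h2|h2] /or3P [h3|h3|h3];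
 first [ by apply: cyc1; ms | by apply: cyc2; ms |
   match goal with
   | h1 : is_true (a ?p ?q), h2 : is_true (a ?p ?t) |- _ =>
       let E := fresh in have E := out_uniq h1 h2;
       match goal with hn : is_true (q != t) |- _ => by rewrite E eqxx in hn end
   | h1 : is_true (a ?q ?p), h2 : is_true (a ?t ?p) |- _ =>
       let E := fresh in have E := in_uniq h1 h2;
       match goal with hn : is_true (q != t) |- _ => by rewrite E eqxx in hn end
   | h1 : is_true (a ?p ?q), h2 : is_true (a ?q ?p) |- _ =>
       by have [hh _] := asimp h1; rewrite h2 in hh
   end ].
Qed.

Lemma Udeg x : #|[set y | U x y]| = r + 2.
Proof.
have -> : [set y | U x y] = [set y | e x y] :|: ([set y | a x y] :|: [set y | a y x]).
  by apply/setP => y; rewrite !inE.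
rewrite card_disjU; last first.
  move=> y; rewrite !inE => h /orP [h'|h'].
    by have [_ /negP] := asimp h'.
  by have [_ /negP] := asimp h'; rewrite esym.
rewrite card_disjU ?edeg ?outdeg ?indeg //.
by move=> y; rewrite !inE => h h'; have [/negP] := asimp h.
Qed.

Lemma exU : exists x y, U x y.
Proof.
case: H => _ [_ [[s [cs ss]] _]].
case: s cs ss => [|x s] //= _ _.
have [y hy] := card1_ex (outdeg x).
by exists x, y; rewrite /U hy orbT.
Qed.

Lemma lower : 2 * (r + 2) <= #|V|.
Proof.
have [x [y hxy]] := exU.
apply: leq_trans (max_card (mem ([set z | U x z] :|: [set z | U y z]))).
rewrite card_disjU ?Udeg ?mul2n ?addnn //.
move=> z; rewrite !inE => h1 h2.
by apply: (notri hxy h2); rewrite Usym.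
Qed.

Hypothesis hV : #|V| = 2 * (r + 2).

Lemma cross x0 u v : U x0 u -> ~~ U x0 v -> U u v.
Proof.
move=> hu hv.
have sub : [set w | U u w] \subset ~: [set w | U x0 w].
  apply/subsetP => w; rewrite !inE => huw; apply/negP => h0.
  by apply: (notri hu huw); rewrite Usym.
have : [set w | U u w] == ~: [set w | U x0 w].
  rewrite eqEcard sub /=.
  have := cardsCs (~: [set w | U x0 w]); rewrite setCK Udeg Udeg hV => ->.
  by rewrite mul2n -addnn addnK.
move/eqP => E.
have : v \in [set w | U u w] by rewrite E !inE.
by rewrite inE.
Qed.

Lemma bip x0 u v : U u v = (U x0 u != U x0 v).
Proof.
case hu: (U x0 u); case hv: (U x0 v) => /=.
- apply/negP => huv; by apply: (notri hu huv); rewrite Usym.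
- by apply: cross hu _; rewrite hv.
- by rewrite Usym; apply: cross hv _; rewrite hu.
- apply/negP => huv.
  have : 0 < #|[set w | U x0 w]| by rewrite Udeg addn2.
  case/card_gt0P => w; rewrite inE => hw.
  have hwu : U w u by apply: cross hw _; rewrite hu.
  have hwv : U w v by apply: cross hw _; rewrite hv.
  by apply: (notri huv _ hwu); rewrite Usym.
Qed.

Lemma structure : exists F A : rel (Kvert (r + 2)),
  [/\ two_factor F, directed_cycle_orientation F A &
      mixed_iso e a (from_K_edges F) A].
Proof.
have [x0 _] := exU.
pose S b := [set v | U x0 v == b].
have cS b : #|S b| = r + 2.
  have e1 : #|S true| = r + 2.
    by rewrite -(Udeg x0); apply: eq_card => v; rewrite !inE eqb_id.
  case: b => //.
  rewrite cardsCs.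
  have -> : #|~: S false| = r + 2.
    by rewrite -e1; apply: eq_card => v; rewrite !inE; case: (U x0 v).
  by rewrite hV mul2n -addnn addnK.
pose g (p : Kvert (r + 2)) : V := nth x0 (enum (S p.1)) p.2.
have gS p : U x0 (g p) = p.1.
  have : g p \in enum (S p.1) by apply: mem_nth; rewrite -cardE cS ltn_ord.
  by rewrite mem_enum inE => /eqP.
have ginj : injective g.
  move=> [b i] [c j] E.
  have bc : b = c by move: (gS (b, i)) (gS (c, j)); rewrite /= E => <- <-.
  subst c; congr pair; apply: val_inj; apply/eqP.
  rewrite -(@nth_uniq _ x0 (enum (S b))) ?enum_uniq ?size_enum -?cardE ?cS ?ltn_ord //.
  by move: E; rewrite /g /= => ->.
have gb : bijective g.
  by apply: inj_card_bij ginj _; rewrite hV card_prod card_bool card_ord.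
have gU p q : U (g p) (g q) = (p.1 != q.1) by rewrite (bip x0) !gS.
pose A p q := a (g p) (g q).
pose F p q := A p q || A q p.
exists F, A.
have hout p : #|[set q | A p q]| = 1 by rewrite (card_bij_pre (a (g p)) gb) outdeg.
have hin p : #|[set q | A q p]| = 1 by rewrite (card_bij_pre (a^~ (g p)) gb) indeg.
have hanti p q : ~~ (A p q && A q p).
  by apply/andP => [[h1 h2]]; have [/negP] := asimp h1.
split.
- split; first by move=> p q; rewrite /F orbC.
  split; last by move=> p; apply: deg2.
  move=> p q; rewrite /F /A /Kedge -gU /U => /orP [h|h]; by rewrite h ?orbT.
- by split => //; split.
- case: gb => g' gg' g'g; exists g'; split; first by exists g.
  split=> x y; last by rewrite /A !g'g.
  rewrite /from_K_edges /Kedge -gU /F /A !g'g /U.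
  case exy: (e x y) => /=.
    apply/norP; split; apply/negP => h; have [_ /negP] := asimp h => //.
    by rewrite esym exy.
  by case: (_ || _).
Qed.
End Gen2.

Lemma model_zrg r (hr : 1 <= r) (F A : rel (Kvert (r + 2))) :
  two_factor F -> directed_cycle_orientation F A ->
  zrg_mixed_graph 1 r 4 (from_K_edges F) A.
Proof.
move=> [Fs [FK Fdeg]] [FA [Aanti Adeg]].
have AF x y : A x y -> F x y by rewrite FA => ->.
have AK x y : A x y -> Kedge x y by move/AF/FK.
have Kirr x : Kedge x x = false by rewrite /Kedge eqxx.
have mK x y : mstep (from_K_edges F) A x y -> Kedge x y.
  by case/orP => [/andP []|/AK].
split; [|split].
- split; first by move=> x y; rewrite /from_K_edges /Kedge eq_sym Fs.
  split; first by move=> x; rewrite /from_K_edges Kirr.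
  split; first by move=> x; apply/negP => /AK; rewrite Kirr.
  move=> x y h; split; first by have := Aanti x y; rewrite h.
  by rewrite /from_K_edges (AF _ _ h) andbF.
- move=> x; have [h1 h2] := Adeg x; split => //; split => //.
  have -> : [set y | from_K_edges F x y] = [set y | Kedge x y] :\: [set y | F x y].
    by apply/setP => y; rewrite !inE andbC.
  rewrite cardsD.
  have -> : [set y | Kedge x y] :&: [set y | F x y] = [set y | F x y].
    by apply/setIidPr/subsetP => y; rewrite !inE; apply: FK.
  rewrite Fdeg.
  have -> : #|[set y | Kedge x y]| = r + 2.
    case: x {h1 h2} => xb xi.
    have -> : [set y | Kedge (xb, xi) y] = [set (~~ xb, i) | i : 'I_(r + 2)].
      apply/setP => [[b j]]; rewrite inE /Kedge /=; apply/idP/imsetP => [h | [i _ [-> _]]].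
        by exists j => //; congr pair; move: h; case: b; case: xb.
      by case: xb.
    by rewrite card_imset ?card_ord // => i j [].
  by rewrite addnK.
- have h0 : 0 < r + 2 by rewrite addn2.
  have h1 : 1 < r + 2 by rewrite addn2.
  split.
  + pose x : Kvert (r + 2) := (false, Ordinal h0).
    have [y hy] := card1_ex (proj1 (Adeg x)).
    have [w hw] := card1_ex (proj1 (Adeg y)).
    have ky := AK _ _ hy; have kw := AK _ _ hw.
    move: y w hy hw ky kw => [yb yi] [wb wi] hy hw ky kw.
    have yb1 : yb = true by move: ky; rewrite /Kedge /=; case: (yb).
    subst yb.
    have wb0 : wb = false by move: kw; rewrite /Kedge /=; case: (wb).
    subst wb.
    pose zi : 'I_(r + 2) := if yi == Ordinal h0 then Ordinal h1 else Ordinal h0.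
    have zy : zi != yi.
      rewrite /zi; case: (yi =P Ordinal h0) => [E|ne]; first by rewrite E.
      by rewrite eq_sym; apply/eqP.
    pose z : Kvert (r + 2) := (true, zi).
    have hzy : z != (true, yi) by apply/eqP => [[E]]; rewrite E eqxx in zy.
    have hxw : (false, wi) != x.
      by apply/eqP => E; rewrite E in hw; have := Aanti x (true, yi); rewrite hy hw.
    have s3 : mstep (from_K_edges F) A (false, wi) z.
      rewrite /mstep /from_K_edges FA.
      case hwz: (A (false, wi) z); first by rewrite orbT.
      case hzw: (A z (false, wi)); last by [].
      have E := card1_uniq (proj2 (Adeg (false, wi))) hw hzw.
      by rewrite E eqxx in hzy.
    have s4 : mstep (from_K_edges F) A z x.
      rewrite /mstep /from_K_edges FA.
      case hzx: (A z x); first by rewrite orbT.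
      case hxz: (A x z); last by [].
      have E := card1_uniq (proj1 (Adeg x)) hy hxz.
      by rewrite E eqxx in hzy.
    exists [:: x; (true, yi); (false, wi); z]; split => //.
    rewrite /mcycle /= /mstep hy hw !orbT /=.
    rewrite /mstep in s3 s4; rewrite s3 s4 /=.
    by rewrite !inE (eq_sym (true, yi) z) (negbTE hzy) (eq_sym x (false, wi)) (negbTE hxw) !xpair_eqE /=.
  + move=> s /andP [hs /andP [_ hc]].
    case: s hs hc => [|p [|q [|t [|u s]]]] //= _.
    case/andP => /mK k1 /andP [/mK k2 /andP [/mK k3 _]].
    by move: k1 k2 k3; rewrite /Kedge; case: p q t => [[] ?] [[] ?] [[] ?].
Qed.

From mathcomp Require Import zify.

Lemma ordS_neq n (i : 'I_n) : 1 < n -> (i == ordS i) = false.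
Proof.
move=> hn; apply/eqP => /(congr1 val) /=.
have := ltn_ord i; rewrite leq_eqVlt => /orP [/eqP E|lt].
  rewrite E modnn => i0; by rewrite -E i0 in hn.
rewrite modn_small //; lia.
Qed.

Lemma model_exists r : exists F A : rel (Kvert (r + 2)),
  two_factor F /\ directed_cycle_orientation F A.
Proof.
have hn : 1 < r + 2 by rewrite addn2.
pose A0 (p q : Kvert (r + 2)) :=
  (p.1 != q.1) && (q.2 == if p.1 then ordS p.2 else p.2).
pose F0 p q := A0 p q || A0 q p.
have hout p : #|[set q | A0 p q]| = 1.
  transitivity #|[set (~~ p.1, if p.1 then ordS p.2 else p.2)]|; last exact: cards1.
  apply: eq_card.
  move=> [b j]; rewrite !inE /A0 /= xpair_eqE.
  by case: p => [[] pi]; case: b.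
have hin q : #|[set p | A0 p q]| = 1.
  transitivity #|[set (~~ q.1, if q.1 then q.2 else ord_pred q.2)]|; last exact: cards1.
  apply: eq_card.
  move=> [b j]; rewrite !inE /A0 /= xpair_eqE.
  case: q => [[] qi]; case: b => //=.
  by apply/eqP/eqP => [->|->]; rewrite ?ordSK ?ord_predK.
have hanti p q : ~~ (A0 p q && A0 q p).
  apply/negP; case: p q => [[] pi] [[] qi]; rewrite /A0 //= => /andP [/eqP -> /eqP E];
    by move/eqP: E; rewrite ?ordS_neq // eq_sym ordS_neq.
exists F0, A0; split.
- split; first by move=> p q; rewrite /F0 orbC.
  split; last by move=> p; apply: deg2.
  by move=> p q; rewrite /F0 /Kedge => /orP [/andP [h _]|/andP [h _]] //; rewrite eq_sym.
- by split => //; split.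
Qed.

Theorem theorem3 (r : nat) (hr : 1 <= r) :
  ((exists (V : finType) (e a : rel V), mixed_cage 1 r 4 e a) /\
   (forall (V : finType) (e a : rel V), mixed_cage 1 r 4 e a ->
      #|V| = 2 * (r + 2))) /\
  (forall (V : finType) (e a : rel V),
     mixed_cage 1 r 4 e a <->
     exists (F A : rel (Kvert (r + 2))),
       [/\ two_factor F, directed_cycle_orientation F A &
           mixed_iso e a (from_K_edges F) A]).
Proof.
have cK : #|Kvert (r + 2)| = 2 * (r + 2) by rewrite card_prod card_bool card_ord.
have [F0 [A0 [tf dco]]] := model_exists r.
have mz := model_zrg hr tf dco.
have cage0 : mixed_cage 1 r 4 (from_K_edges F0) A0.
  split => // W e' a' h; rewrite cK; exact: lower h.
have ord : forall (V : finType) (e a : rel V), mixed_cage 1 r 4 e a -> #|V| = 2 * (r + 2).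
  move=> V e a [h m]; apply/eqP; rewrite eqn_leq (lower h) andbT -cK.
  exact: m _ _ _ mz.
split; first split.
- by exists (Kvert (r + 2)), (from_K_edges F0), A0.
- exact: ord.
- move=> V e a; split.
  + move=> hc; have hV := ord _ _ _ hc; case: hc => h _; exact: structure h hV.
  + move=> [F [A [tf' dco' iso]]].
    have [h cV] := iso_zrg iso (model_zrg hr tf' dco').
    split => // W e' a' h'; rewrite cV cK; exact: lower h'.
Qed.
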